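(* The metric space $(\mathcal{GH}_1,d_{\mathrm{GH}})$ of (isometry classes of) compact metric pairs is separable.
   Context: A metric pair $(X,A)$ is a metric space $(X,d_X)$ with a non-empty closed subset $A\subset X$; it is compact if $X$ is compact; pairs are identified up to isometries of the spaces mapping the subsets onto each other. For subsets $X,Y$ of a metric space $(Z,\delta)$, $d^\delta_{\mathrm H}((X,A),(Y,B)):=d^\delta_{\mathrm H}(X,Y)+d^\delta_{\mathrm H}(A,B)$ (usual Hausdorff distances). A metric $\delta$ on $X\sqcup Y$ is admissible if it restricts to $d_X$ on $X$ and $d_Y$ on $Y$; the Gromov--Hausdorff distance of compact metric pairs is $d_{\mathrm{GH}}((X,A),(Y,B)):=\inf_\delta d^\delta_{\mathrm H}((X,A),(Y,B))$ over admissible $\delta$. $\mathcal{GH}_1$ is the space of compact metric pairs with this distance. *)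

(* Defs.v *)
From HB Require Import structures.
From mathcomp Require Import all_boot all_order all_algebra.
From mathcomp Require Import all_classical all_reals.
From mathcomp Require Import ereal Rstruct.

Set Implicit Arguments.
Unset Strict Implicit.
Unset Printing Implicit Defensive.
Import Order.TTheory GRing.Theory Num.Theory.
Local Open Scope classical_set_scope.
Local Open Scope ring_scope.

Definition Rl := Rdefinitions.R.

Definition is_metric (T : Type) (d : T -> T -> Rl) : Prop :=
  (forall x, d x x = 0) /\
  (forall x y, d x y = 0 -> x = y) /\
  (forall x y, d x y = d y x) /\
  (forall x y z, d x z <= d x y + d y z).

Definition mopen (T : Type) (d : T -> T -> Rl) (U : set T) : Prop :=
  forall x, U x -> exists r : Rl, 0 < r /\ forall y, d x y < r -> U y.

Definition mclosed (T : Type) (d : T -> T -> Rl) (A : set T) : Prop :=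
  mopen d (~` A).

Definition mcompact (T : Type) (d : T -> T -> Rl) : Prop :=
  forall (I : Type) (U : I -> set T),
    (forall i, mopen d (U i)) -> (forall x, exists i, U i x) ->
    exists (n : nat) (f : nat -> I), forall x, exists k : nat, (k < n)%N /\ U (f k) x.

Record CMPair := {
  cmp_carrier : Type;
  cmp_dist : cmp_carrier -> cmp_carrier -> Rl;
  cmp_metric : is_metric cmp_dist;
  cmp_compact : mcompact cmp_dist;
  cmp_sub : set cmp_carrier;
  cmp_sub_nonempty : exists a, cmp_sub a;
  cmp_sub_closed : mclosed cmp_dist cmp_sub }.

Definition hausdorff (Z : Type) (delta : Z -> Z -> Rl) (S T : set Z) : \bar Rl :=
  Order.max
    (ereal_sup [set ereal_inf [set (delta s t)%:E | t in T] | s in S])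
    (ereal_sup [set ereal_inf [set (delta s t)%:E | s in S] | t in T]).

Definition admissible (P Q : CMPair)
    (delta : (cmp_carrier P + cmp_carrier Q)%type -> (cmp_carrier P + cmp_carrier Q)%type -> Rl) : Prop :=
  is_metric delta /\
  (forall x x', delta (inl x) (inl x') = cmp_dist x x') /\
  (forall y y', delta (inr y) (inr y') = cmp_dist y y').

Definition dGH (P Q : CMPair) : \bar Rl :=
  ereal_inf [set (hausdorff delta [set inl x | x in [set: cmp_carrier P]]
                                  [set inr y | y in [set: cmp_carrier Q]]
                  + hausdorff delta [set inl a | a in @cmp_sub P]
                                    [set inr b | b in @cmp_sub Q])%E
            | delta in @admissible P Q].

(* separability of (GH_1, d_GH): a countable (sequence-indexed) family is dense.
   Since d_GH is isometry-invariant, this is separability of the quotient. *)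
Definition GH1_separable : Prop :=
  exists D : nat -> CMPair,
    forall (P : CMPair) (eps : Rl), 0 < eps -> exists n, (dGH P (D n) < eps%:E)%E.

(* Main.v *)
Require Import Defs.
From mathcomp Require Import all_boot all_order all_algebra.
From mathcomp Require Import all_classical all_reals.
From mathcomp Require Import ereal Rstruct lra.

Set Implicit Arguments.
Unset Strict Implicit.
Unset Printing Implicit Defensive.
Import Order.TTheory GRing.Theory Num.Theory.
Local Open Scope classical_set_scope.
Local Open Scope ring_scope.

Lemma metric_ge0 T (d : T -> T -> Rl) : is_metric d -> forall x y, 0 <= d x y.
Proof.
move=> [d0 [_ [ds dt]]] x y. have := dt x y x. have := ds x y. rewrite d0. lra.
Qed.

Lemma ball_open T (d : T -> T -> Rl) : is_metric d -> forall x e, mopen d [set y | d x y < e].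
Proof.
move=> [d0 [_ [ds dt]]] x e y /= hy. exists (e - d x y); split; first lra.
move=> z hz /=. have := dt x y z. lra.
Qed.

Lemma fin_lb (T : eqType) (s : seq T) (g : T -> Rl) :
  (forall x, x \in s -> 0 < g x) -> exists r, 0 < r /\ forall x, x \in s -> r <= g x.
Proof.
elim: s => [|a s IH] h; first by exists 1; split => //; exact: ltr01.
have [r [r0 hr]] : exists r, 0 < r /\ forall x, x \in s -> r <= g x.
  by apply: IH => x hx; apply: h; rewrite in_cons hx orbT.
exists (Num.min r (g a)); split.
  by rewrite lt_min r0 h // mem_head.
move=> x; rewrite in_cons => /orP [/eqP -> | hx].
  by rewrite ge_min lexx orbT.
by rewrite ge_min hr.
Qed.

Lemma fin_open (T : finType) (d : T -> T -> Rl) : is_metric d -> forall U : set T, mopen d U.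
Proof.
move=> hd U x Ux.
have hpos : forall y, y \in [seq y <- enum T | y != x] -> 0 < d x y.
  move=> y; rewrite mem_filter => /andP [ne _].
  have h0 := metric_ge0 hd x y.
  rewrite lt_neqAle h0 andbT; apply/eqP => h.
  have exy := (proj1 (proj2 hd)) x y (esym h); subst; by rewrite eqxx in ne.
have [r [r0 hr]] := fin_lb hpos.
exists r; split=> // y hy.
case: (eqVneq y x) => [->//|ne].
have := hr y; rewrite mem_filter ne mem_enum => /(_ isT). lra.
Qed.

Lemma fin_compact (T : finType) (d : T -> T -> Rl) (S : set T) : (exists a, S a) -> mcompact d.
Proof.
move=> [x0 _] I U _ cov. have [g hg] := choice cov.
exists #|T|, (fun k => g (nth x0 (enum T) k)) => x.
exists (index x (enum T)); split.
  by rewrite cardE index_mem mem_enum.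
by rewrite nth_index ?mem_enum.
Qed.

Lemma haus_le (Z : Type) (delta : Z -> Z -> Rl) (S T : set Z) (b : Rl) :
 (forall s, S s -> exists2 t, T t & delta s t <= b) ->
 (forall t, T t -> exists2 s, S s & delta s t <= b) -> (hausdorff delta S T <= b%:E)%E.
Proof.
move=> h1 h2; rewrite /hausdorff ge_max; apply/andP; split; apply: ge_ereal_sup => _ [s Ss <-].
  have [t Tt le] := h1 s Ss; apply: ge_ereal_inf; exists (delta s t)%:E; first by exists t.
  by rewrite lee_fin.
have [t Tt le] := h2 s Ss; apply: ge_ereal_inf; exists (delta t s)%:E; first by exists t.
by rewrite lee_fin.
Qed.

Definition unit_dist (x y : unit) : Rl := 0.
Lemma unit_metric : is_metric unit_dist.
Proof. split; first by []. split; first by case; case. split; first by [].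
by move=> *; rewrite /unit_dist addr0. Qed.
Lemma unit_closed : mclosed unit_dist setT.
Proof. by move=> x hx; exfalso; apply: hx. Qed.
Lemma unit_ne : exists a : unit, setT a. Proof. by exists tt. Qed.
Definition defP : CMPair :=
  @Build_CMPair unit unit_dist unit_metric (@fin_compact _ unit_dist _ unit_ne) setT unit_ne unit_closed.

Definition fdata := (nat * nat * seq (seq int) * seq nat)%type.
Definition fm (c : fdata) := c.1.1.1.
Definition fN (c : fdata) := c.1.1.2.
Definition fs (c : fdata) := c.1.2.
Definition fb (c : fdata) := c.2.
Definition fdist (c : fdata) (i j : 'I_(fm c)) : Rl :=
  if i == j then 0 else ((nth 0 (nth [::] (fs c) i) j)%:~R + 3) / (fN c)%:R.
Definition fsub (c : fdata) : set 'I_(fm c) := [set i | (val i \in fb c)].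
Definition fvalid c := is_metric (@fdist c) /\ exists a, @fsub c a.

Definition mkP (c : fdata) : CMPair :=
  match pselect (fvalid c) with
  | left h => @Build_CMPair 'I_(fm c) (@fdist c) (proj1 h)
               (@fin_compact _ (@fdist c) _ (proj2 h)) (@fsub c) (proj2 h)
               (@fin_open _ (@fdist c) (proj1 h) _)
  | right _ => defP
  end.

Definition Dseq (n : nat) : CMPair :=
  match unpickle n with Some c => mkP c | None => defP end.

Lemma Dseq_mkP c : exists n, Dseq n = mkP c.
Proof. by exists (pickle c); rewrite /Dseq pickleK. Qed.

Lemma fl_bounds (Nr D : Rl) : 0 < Nr ->
  D + 2 / Nr < ((Num.floor (Nr * D))%:~R + 3) / Nr /\
  ((Num.floor (Nr * D))%:~R + 3) / Nr <= D + 3 / Nr.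
Proof.
move=> N0. have h1 := floor_le (Nr * D). have h2 := floorD1_gt (Nr * D).
rewrite intrD in h2. have Nn : Nr != 0 by rewrite gt_eqF.
split.
  rewrite ltr_pdivlMr // mulrDl divfK //. lra.
rewrite ler_pdivrMr // mulrDl divfK //. lra.
Qed.

Lemma main_lemma (P : CMPair) (eps : Rl) : 0 < eps -> exists c, (dGH P (mkP c) < eps%:E)%E.
Proof.
case: P => X d hm hc A hne hcl /= he.
have [d0 [deq [dsym dtri]]] := hm.
have dge0 := metric_ge0 hm.
pose e := eps / 4. have e0 : 0 < e by rewrite /e divr_gt0.
pose q := 12 / eps. pose N := Num.Def.archi_bound q.
have q0 : 0 < q by rewrite /q divr_gt0.
have hq : q < N%:R by apply: archi_boundP; rewrite ltW.
have N0 : 0 < (N%:R : Rl) by apply: lt_trans q0 hq.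
pose r := 3 / (N%:R : Rl).
have r0 : 0 < r by rewrite /r divr_gt0.
have two0 : 0 < 2 / (N%:R:Rl) by rewrite divr_gt0.
have re : r < e.
  rewrite /r ltr_pdivrMr // /e.
  have hqe : q * eps = 12 by rewrite /q divfK // gt_eqF.
  have hNq : 0 < N%:R - q by rewrite subr_gt0.
  have h := mulr_gt0 he hNq.
  nra.
have cov1 : forall x, exists i, [set y | d i y < e] x by move=> x; exists x; rewrite /= d0.
have [n1 [f1 hf1]] := hc X (fun x => [set y | d x y < e]) (fun x => @ball_open X d hm x e) cov1.
pose U (o : option {a : X | A a}) : set X :=
  if o is Some a then [set y | d (sval a) y < e] else ~` A.
have Uo : forall o, mopen d (U o) by case => [a|]; [exact: ball_open | exact: hcl].
have Uc : forall x, exists o, U o x.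
  move=> x; case: (pselect (A x)) => hx; last by exists None.
  by exists (Some (exist _ x hx)); rewrite /= d0.
have [n2 [f2 hf2]] := hc _ U Uo Uc.
have [a0 ha0] := hne.
have n2pos : (0 < n2)%N by case: (hf2 a0) => k [hk _]; apply: leq_ltn_trans (leq0n k) hk.
pose pt (k : nat) : X := if (k < n1)%N then f1 k else
   if f2 (k - n1)%N is Some a then sval a else a0.
pose m := (n1 + n2)%N.
pose s := [seq [seq Num.floor (N%:R * d (pt i) (pt j)) | j <- iota 0 m] | i <- iota 0 m].
pose c : fdata := (m, N, s, iota n1 n2).
pose p (i : 'I_m) := pt i.
have fdE : forall i j : 'I_m, i != j ->
    @fdist c i j = ((Num.floor (N%:R * d (p i) (p j)))%:~R + 3) / N%:R.
  move=> i j ne; rewrite /fdist (negbTE ne) /fs /=.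
  rewrite (nth_map 0%N) ?size_iota // nth_iota // (nth_map 0%N) ?size_iota // nth_iota //.
have f0 : forall i : 'I_m, @fdist c i i = 0 by move=> i; rewrite /fdist eqxx.
have hlo : forall i j : 'I_m, i != j -> d (p i) (p j) + 2 / N%:R < @fdist c i j.
  by move=> i j ne; rewrite fdE //; exact: (proj1 (fl_bounds _ N0)).
have hup : forall i j : 'I_m, i != j -> @fdist c i j <= d (p i) (p j) + 3 / N%:R.
  by move=> i j ne; rewrite fdE //; exact: (proj2 (fl_bounds _ N0)).
have hle : forall i j : 'I_m, d (p i) (p j) <= @fdist c i j.
  move=> i j; case: (eqVneq i j) => [->|ne]; first by rewrite f0 d0.
  have := hlo i j ne; lra.
have hle2 : forall i j : 'I_m, @fdist c i j <= d (p i) (p j) + r.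
  move=> i j; case: (eqVneq i j) => [->|ne]; first by rewrite f0 d0 add0r ltW.
  exact: hup.
have fm_metric : is_metric (@fdist c).
  split; first exact: f0.
  split.
    move=> i j h; case: (eqVneq i j) => // ne; exfalso.
    have := hlo i j ne; have := dge0 (p i) (p j); lra.
  split.
    move=> i j; case: (eqVneq i j) => [->//|ne].
    by rewrite !fdE // 1?eq_sym // dsym.
  move=> x y z; case: (eqVneq x z) => [->|nexz].
    rewrite f0; have := hle z y; have := hle y z.
    have := dge0 (p z) (p y); have := dge0 (p y) (p z); lra.
  case: (eqVneq x y) => [->|nexy]; first by rewrite f0 add0r.
  case: (eqVneq y z) => [->|neyz]; first by rewrite f0 addr0.
  have := hup x z nexz; have := hlo x y nexy; have := hlo y z neyz.
  have := dtri (p x) (p y) (p z); have : 0 < 1 / (N%:R : Rl) by rewrite divr_gt0.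
  lra.
have h1m : (n1 < m)%N by rewrite /m -{1}(addn0 n1) ltn_add2l.
have hB : exists a, @fsub c a.
  by exists (Ordinal h1m); rewrite /fsub /= mem_iota leqnn h1m.
exists c. rewrite /mkP; case: pselect => [hv'|]; last by case; split.
pose delta (u v : (X + 'I_m)%type) : Rl :=
  match u, v with
  | inl x, inl y => d x y
  | inr i, inr j => @fdist c i j
  | inl x, inr j => d x (p j) + r
  | inr i, inl y => d y (p i) + r
  end.
apply: (@le_lt_trans _ _ ((e + r) + (e + r))%:E); last first.
  rewrite lte_fin; have h4 : e * 4 = eps by rewrite /e; lra.
  lra.
rewrite /dGH; apply: ge_ereal_inf.
exists (hausdorff delta [set inl x | x in [set: X]] [set inr y | y in [set: 'I_m]]
        + hausdorff delta [set inl a | a in A] [set inr b | b in @fsub c])%E.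
  exists delta => //.
  split; last by split.
  split; first by case => [x|i] /=; [exact: d0 | exact: f0].
  split.
    case=> [x|i] [y|j] /= h.
    - by congr inl; exact: deq.
    - by exfalso; have := dge0 x (p j); lra.
    - by exfalso; have := dge0 y (p i); lra.
    - by congr inr; exact: (proj1 (proj2 fm_metric)) _ _ h.
  split.
    case=> [x|i] [y|j] //=; first [exact: dsym | exact: (proj1 (proj2 (proj2 fm_metric)))].
  case=> [x|i] [y|j] [z|k] /=.
  - exact: dtri.
  - by have := dtri x y (p k); lra.
  - by have := dtri x (p j) z; have := dsym (p j) z; lra.
  - by have := dtri x (p j) (p k); have := hle j k; lra.
  - by have := dtri z y (p i); have := dsym z y; lra.
  - by have := hle2 i k; have := dtri (p i) y (p k); have := dsym (p i) y; lra.
  - by have := dtri z (p j) (p i); have := dsym (p j) (p i); have := hle i j; lra.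
  - exact: (proj2 (proj2 (proj2 fm_metric))).
rewrite EFinD; apply: leeD; apply: haus_le.
- move=> _ [x _ <-]. have [k [hk hd]] := hf1 x.
  have hkm : (k < m)%N by rewrite /m ltn_addr.
  exists (inr (Ordinal hkm)); first by exists (Ordinal hkm).
  rewrite /= /p /pt /= hk dsym. move: hd => /= hd. lra.
- move=> _ [i _ <-]. exists (inl (p i)); first by exists (p i).
  rewrite /= d0. lra.
- move=> _ [a ha <-]. have [k [hk hU]] := hf2 a.
  move: hU; case ef: (f2 k) => [a'|] /= hU; last by exfalso; apply: hU.
  have hkm : (n1 + k < m)%N by rewrite /m ltn_add2l.
  exists (inr (Ordinal hkm)).
    by exists (Ordinal hkm) => //; rewrite /fsub /= mem_iota leq_addr ltn_add2l.
  rewrite /= /p /pt /= ltnNge leq_addr /= addKn ef /= dsym. lra.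
- move=> _ [i hi <-]. exists (inl (p i)).
    exists (p i) => //. move: hi; rewrite /fsub /= mem_iota => /andP [h1 _].
    rewrite /p /pt ltnNge h1 /=. by case: (f2 _) => [[a' ha']|].
  rewrite /= d0. lra.
Qed.

Theorem theorem3p7 : GH1_separable.
Proof.
exists Dseq => P eps he.
have [c hc] := main_lemma P he.
have [n hn] := Dseq_mkP c.
by exists n; rewrite hn.
Qed.
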